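(* Let $S$ be a reflective numerical semigroup with $\mathrm{g}(S)=g\ge1$ and $\mathrm{m}(S)=a$, and let $r\in\{1,\dots,a-1\}$ satisfy $g\equiv r\pmod a$. Then \[ \mathrm{Ap}(S;a)=\{0,\ 2g+a-r\}\cup\big(\{g+1,\dots,g+(a-1)\}\setminus\{g+(a-r)\}\big). \] In particular, if $g\equiv -1\pmod a$, then $\mathrm{Ap}(S;a)=\{0,2g+1\}\cup\{g+2,\dots,g+(a-1)\}$.
   Context: A numerical semigroup is a submonoid $S$ of $(\mathbb{N}_0,+)$ with finite complement. Its genus $\mathrm{g}(S)$ is the number of elements of $\mathbb{N}_0\setminus S$, and its multiplicity $\mathrm{m}(S)$ is the smallest positive element of $S$. For $0\ne t\in S$, the Apéry set of $S$ relative to $t$ is $\mathrm{Ap}(S;t)=\{s\in S: s-t\notin S\}$. A numerical semigroup $S$ of genus $g\ge1$ is called reflective if for every $z\in\{0,1,\dots,g-1\}$ exactly one of $z$ and $z+g$ belongs to $S$. *)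

(* Defs.v *)
From mathcomp Require Import all_boot.
Set Implicit Arguments. Unset Strict Implicit. Unset Printing Implicit Defensive.

Definition numerical_semigroup (S : pred nat) : Prop :=
  [/\ S 0,
      (forall x y, S x -> S y -> S (x + y)) &
      exists N, forall n, N <= n -> S n].

Definition genus (S : pred nat) (g : nat) : Prop :=
  exists gaps : seq nat,
    [/\ uniq gaps, (forall n, (n \in gaps) = ~~ S n) & size gaps = g].

Definition multiplicity (S : pred nat) (a : nat) : Prop :=
  [/\ 0 < a, S a & forall b, 0 < b -> b < a -> ~~ S b].

(* Apery set Ap(S;t) = {s in S : s - t notin S}; s - t is taken in Z,
   so if s < t then s - t is negative and hence not in S. *)
Definition Apery (S : pred nat) (t : nat) : pred nat :=
  fun s => S s && ((s < t) || ~~ S (s - t)).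

Definition reflective (S : pred nat) (g : nat) : Prop :=
  forall z, z < g -> S z (+) S (z + g).

(* Main.v *)
Require Import Defs.
From mathcomp Require Import all_boot zify.

Lemma all_large (S : pred nat) g :
  numerical_semigroup S -> genus S g -> reflective S g ->
  forall n, 2 * g <= n -> S n.
Proof.
move=> [S0 Sadd _] [gaps [ugaps Hgaps sz]] refl n Hn.
apply/negPn/negP => nS.
pose f := fun z => if S z then z + g else z.
have Hs: {subset map f (iota 0 g) <= gaps}.
  move=> y /mapP [z]; rewrite mem_iota => /andP[_ zg] ->.
  rewrite Hgaps /f; have := refl z zg.
  by case Sz: (S z) => /=; rewrite ?Sz //; case: (S (z+g)).
have us: uniq (map f (iota 0 g)).
  rewrite map_inj_in_uniq ?iota_uniq //.
  move=> z1 z2; rewrite !mem_iota /f; move=> /andP[_ h1] /andP[_ h2].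
  case: (S z1); case: (S z2); lia.
have szp : size gaps <= size (map f (iota 0 g)) by rewrite size_map size_iota sz.
have [_ eqs] := uniq_min_size us Hs szp.
have : n \in gaps by rewrite Hgaps nS.
rewrite -eqs => /mapP [z]; rewrite mem_iota /f; move=> /andP[_ zg].
case: (S z); lia.
Qed.

Lemma dvd_small a m : 0 < m < 2 * a -> (a %| m) = (m == a).
Proof.
move=> Hm; apply/idP/idP.
  by case/dvdnP => c E; apply/eqP; rewrite {}E in Hm *; case: c Hm => [|[|c]] Hm; nia.
by move/eqP->; apply: dvdnn.
Qed.

Lemma dvd_lt a m : m < a -> (a %| m) = (m == 0).
Proof.
move=> Hm; apply/idP/idP.
  by case/dvdnP => c E; apply/eqP; rewrite {}E in Hm *; case: c Hm => [|[|c]] Hm; nia.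
by move/eqP->; apply: dvdn0.
Qed.

Lemma dvd_shift a y : (a %| y + a) = (a %| y).
Proof. by rewrite dvdn_addl. Qed.

Lemma charS (S : pred nat) g a :
  numerical_semigroup S -> genus S g -> multiplicity S a -> reflective S g ->
  forall x, S x = [|| (x < g) && (a %| x), (g <= x < 2*g) && ~~(a %| (x-g)) | 2*g <= x].
Proof.
move=> NS G [a0 Sa Hm] refl.
have L := @all_large S g NS G refl.
case: NS => [S0 Sadd _].
have C : forall x, a %| x -> S x.
  move=> x /dvdnP [c ->]; elim: c => [|c IH] //=.
  by rewrite mulSn; apply: Sadd.
have B : forall n x, x <= n -> x < g -> ~~ (a %| x) -> ~~ S x.
  elim=> [|n IH] x xn xg nd.
    have x0 : x = 0 by lia. by rewrite x0 dvdn0 in nd.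
  case: (ltnP x a) => xa.
    apply: Hm => //; rewrite lt0n; apply: contra nd => /eqP ->; exact: dvdn0.
  have E : x = (x - a) + a by lia.
  have h1 : ~~ S (x - a).
    apply: IH; try lia. by rewrite -dvd_shift -E.
  have h2 : S (x - a + g).
    have := refl (x - a) ltac:(lia). by move: h1; case: (S (x-a)).
  have h3 : S (x + g).
    have -> : x + g = x - a + g + a by lia. exact: Sadd.
  have := refl x xg. by rewrite h3; case: (S x).
have SzE : forall z, z < g -> S z = (a %| z).
  move=> z zg; case D: (a %| z); first by apply: C; rewrite D.
  by apply/negbTE; apply: (B z) => //; rewrite D.
move=> x.
case: (ltnP x g) => xg.
  rewrite SzE //; lia.
case: (ltnP x (2*g)) => x2.
  have := refl (x - g) ltac:(lia).
  have -> : x - g + g = x by lia.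
  rewrite SzE; last lia.
  case: (a %| x - g); case: (S x); lia.
rewrite L //; lia.
Qed.

Lemma a_le (S : pred nat) g a :
  numerical_semigroup S -> genus S g -> multiplicity S a -> reflective S g ->
  1 <= g -> a <= g.+1.
Proof.
move=> NS G [a0 Sa Hm] refl g1.
rewrite leqNgt; apply/negP => ag.
case: (ltnP 1 g) => g2.
  have := refl 1 g2.
  have -> : S 1 = false by apply/negbTE; apply: Hm; lia.
  have -> : S (1 + g) = false by apply/negbTE; apply: Hm; lia.
  done.
have : S 2 by apply: (@all_large S g NS G refl); lia.
by apply/negP; apply: Hm; lia.
Qed.

Ltac gend := repeat match goal with |- context [?a %| ?y] => generalize (a %| y) => ? end.

Theorem mainTheorem5 (S : pred nat) (g a r : nat) :
  numerical_semigroup S -> genus S g -> 1 <= g -> multiplicity S a ->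
  reflective S g ->
  1 <= r -> r <= a - 1 -> g %% a = r ->
  (forall x, Apery S a x <->
     [\/ x = 0, x = 2 * g + a - r |
         [/\ g + 1 <= x, x <= g + (a - 1) & x <> g + (a - r)]])
  /\
  ((g + 1) %% a = 0 ->
   forall x, Apery S a x <->
     [\/ x = 0, x = 2 * g + 1 | g + 2 <= x <= g + (a - 1)]).
Proof.
move=> NS G g1 M refl r1 ra gr.
have ag := @a_le S g a NS G M refl g1.
have cS := @charS S g a NS G M refl.
have [q gE] : exists q, g = q * a + r by exists (g %/ a); rewrite {1}(divn_eq g a) gr.
have rg : g < a -> r = g by move=> h; rewrite -gr modn_small.
clear gr.
have K : forall y, g <= y < g + a -> (a %| y) = (y == g + a - r).
  move=> y Hy.
  have -> : y = q * a + (r + (y - g)) by lia.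
  rewrite dvdn_addr ?dvdn_mull // dvd_small; lia.
have E : forall x, Apery S a x =
   [|| x == 0, x == 2*g+a-r | [&& g+1 <= x, x <= g+(a-1) & x != g+(a-r)]].
  clear gE.
  move=> x; rewrite /Apery !cS.
  case: (ltnP x g) => xg.
    case: (ltnP x a) => xa.
      rewrite (dvd_lt a x) //; gend; lia.
    have -> : (a %| x) = (a %| (x - a)) by rewrite -(dvd_shift a (x - a)) (_ : x - a + a = x) //; lia.
    gend; lia.
  case: (ltnP x (2*g)) => x2.
    have [xeg|xng] := eqVneq x g.
      rewrite xeg subnn dvdn0 /=; gend; lia.
    case: (ltnP x (g + a)) => xga.
      rewrite (dvd_lt a (x - g)); last lia.
      have -> : (a %| x - a) = (a %| x) by rewrite -(dvd_shift a (x - a)) (_ : x - a + a = x) //; lia.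
      rewrite (K x); last lia.
      gend; lia.
    have -> : (a %| x - g) = (a %| (x - a - g)) by rewrite -(dvd_shift a (x - a - g)) (_ : x - a - g + a = x - g) //; lia.
    gend; lia.
  case: (ltnP x (2 * g + a)) => x3; last by gend; lia.
  case: (ltnP (x - a) g) => xa.
    have r2 : r = g by apply: rg; lia.
    have x2g : x = 2 * g by lia.
    have -> : (a %| x - a) = (a %| x) by rewrite -(dvd_shift a (x - a)) (_ : x - a + a = x) //; lia.
    rewrite (K x); last lia.
    gend; lia.
  have -> : (a %| x - a - g) = (a %| (x - g)) by rewrite -(dvd_shift a (x - a - g)) (_ : x - a - g + a = x - g) //; lia.
  rewrite (K (x - g)); last lia.
  gend; lia.
have P1 : forall x, Apery S a x <->
     [\/ x = 0, x = 2 * g + a - r |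
         [/\ g + 1 <= x, x <= g + (a - 1) & x <> g + (a - r)]].
  move=> x; rewrite E; split.
    case/or3P => [/eqP H|/eqP H|/and3P [H1 H2 /eqP H3]].
    - by constructor 1.
    - by constructor 2.
    - by constructor 3.
  case=> [H|H|[H1 H2 H3]]; lia.
split => // g1a x.
have ra1 : r = a - 1.
  have : a %| r + 1.
    have := g1a; rewrite gE -addnA => /eqP.
    by rewrite -/(dvdn _ _) dvdn_addr ?dvdn_mull.
  rewrite dvd_small; lia.
rewrite P1; split.
  case=> [H|H|[H1 H2 H3]]; [constructor 1 | constructor 2 | constructor 3]; lia.
case=> [H|H|/andP[H1 H2]]; [constructor 1; lia | constructor 2; lia | constructor 3; split; lia].
Qed.
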